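(* Let $\{\mathbf{k}^{(N)}\}_{N\ge1}$ be a sequence with $\mathbf{k}^{(N)}=(k_1^{(N)},\dots,k_N^{(N)})\in\Delta_N$, and let $\mathbf{k}\in\Delta_0$ be such that $\lim_{N\to\infty,N\ge j}k_j^{(N)}=k_j$ for every $j\ge1$. Then for every $i\ge1$, $l_i(\mathbf{k}^{(N)})\to l_i(\mathbf{k})$ and $\sum_{j=i}^\infty l_j(\mathbf{k}^{(N)})\to\sum_{j=i}^\infty l_j(\mathbf{k})$ as $N\to\infty$.
   Context: $\Delta_N=\{(k_1,\dots,k_N)\in(\mathbb{Z}\cup\{-\infty\})^N:k_1\ge\dots\ge k_N\}$; $\Delta_0=\{\mathbf{k}=(k_j)_{j\ge1}\in\mathbb{Z}_+^{\mathbb{N}}:k_1\ge k_2\ge\cdots,\ k_i=0\text{ for all large }i\}$, where $\mathbb{Z}_+=\{0,1,2,\dots\}$. For a finite or infinite sequence $\mathbf{k}$ and $i\in\mathbb{Z}\cup\{-\infty\}$, $l_i(\mathbf{k})=\#\{j:k_j=i\}$. *)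

(* Defs.v *)
From mathcomp Require Import all_boot all_order all_algebra.
Set Implicit Arguments. Unset Strict Implicit. Unset Printing Implicit Defensive.
Import Order.TTheory GRing.Theory Num.Theory.

(* Z ∪ {-oo} is represented by [option int]: [None] = -oo, [Some z] = z. *)
Definition le_zinf (x y : option int) : bool :=
  match x, y with
  | None, _ => true
  | Some _, None => false
  | Some a, Some b => (a <= b)%R
  end.

(* (k_1,...,k_N) ∈ Δ_N, with 0-based index: kv j = k_{j+1}. *)
Definition in_DeltaN (N : nat) (kv : 'I_N -> option int) : Prop :=
  forall a b : 'I_N, (a <= b)%N -> le_zinf (kv b) (kv a).

(* k ∈ Δ_0, with 0-based index: k j = k_{j+1}. *)
Definition in_Delta0 (k : nat -> nat) : Prop :=
  (forall a b, (a <= b)%N -> (k b <= k a)%N) /\ (exists M, forall j, (M <= j)%N -> k j = 0%N).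

Definition lN (N : nat) (kv : 'I_N -> option int) (i : int) : nat :=
  #|[set j : 'I_N | kv j == Some i]|.

Definition l_inf_is (k : nat -> nat) (i : nat) (n : nat) : Prop :=
  exists s : seq nat, [/\ uniq s, (forall j, j \in s <-> k j = i) & size s = n].

(* \sum_{j >= i} f j = S for a series of naturals (convergence of partial sums,
   which for naturals means eventual equality). *)
Definition nat_series_from (f : nat -> nat) (i S : nat) : Prop :=
  exists M, forall M', (M <= M')%N -> (\sum_(i <= j < M') f j)%N = S.

(* Main.v *)
Require Import Defs.
From mathcomp Require Import all_boot all_order all_algebra.
Import Order.TTheory GRing.Theory Num.Theory.

Lemma unif_bound (kseq : forall N : nat, 'I_N -> option int) (k : nat -> nat)
  (hlim : forall j : nat, exists M : nat, forall (N : nat) (hj : (j < N)%N),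
       (M <= N)%N -> kseq N (Ordinal hj) = Some (Posz (k j))) n :
  exists M, forall j, (j < n)%N -> forall N (hj : (j < N)%N),
     (M <= N)%N -> kseq N (Ordinal hj) = Some (Posz (k j)).
Proof.
elim: n => [|n [M HM]]; first by exists 0%N.
have [Mn HMn] := hlim n.
exists (maxn M Mn) => j; rewrite ltnS leq_eqVlt => /orP [/eqP -> | jn] N hj.
  by rewrite geq_max => /andP [_ H]; apply: HMn.
by rewrite geq_max => /andP [H _]; apply: HM.
Qed.

Lemma series_lemma (g : nat -> nat) K i :
  (forall j, (K <= j)%N -> g j = 0%N) ->
  nat_series_from g i (\sum_(i <= j < maxn i K) g j)%N.
Proof.
move=> hg; exists (maxn i K) => M' hM'.
rewrite (@big_cat_nat _ _ _ (maxn i K)) //=; last by rewrite leq_maxl.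
rewrite [X in (_ + X)%N]big1_seq ?addn0 // => j /andP [_].
rewrite mem_index_iota => /andP [h _]; apply: hg.
exact: leq_trans (leq_maxr _ _) h.
Qed.

Theorem lemma3p10
  (kseq : forall N : nat, 'I_N -> option int) (k : nat -> nat)
  (hkN : forall N : nat, in_DeltaN (kseq N))
  (hk : in_Delta0 k)
  (hlim : forall j : nat, exists M : nat, forall (N : nat) (hj : (j < N)%N),
       (M <= N)%N -> kseq N (Ordinal hj) = Some (Posz (k j))) :
  forall i : nat, (1 <= i)%N ->
    (exists n : nat, l_inf_is k i n /\
       exists M : nat, forall N : nat, (M <= N)%N -> lN (kseq N) (Posz i) = n)
    /\
    (exists S : nat,
       (exists f : nat -> nat, (forall j, (i <= j)%N -> l_inf_is k j (f j)) /\ nat_series_from f i S) /\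
       exists M : nat, forall N : nat, (M <= N)%N ->
         nat_series_from (fun j => lN (kseq N) (Posz j)) i S).
Proof.
move=> i hi.
case: hk => [kmono [L hL]].
pose cnt j := (\sum_(0 <= x < L | k x == j) 1)%N.
have hinf : forall j, (1 <= j)%N -> l_inf_is k j (cnt j).
  move=> j hj; exists [seq x <- index_iota 0 L | k x == j]; split.
  - by rewrite filter_uniq // iota_uniq.
  - move=> x; rewrite mem_filter mem_index_iota /=; split.
      by case/andP => /eqP.
    move=> kx; rewrite kx eqxx /=; case: (ltnP x L) => // Lx.
    by move: (hL x Lx); rewrite kx => j0; move: hj; rewrite j0.
  - by rewrite size_filter /cnt sum1_count.
have [Mb HMb] := unif_bound kseq k hlim L.+1.
pose Nb := maxn Mb L.+1.
have hlN : forall N j, (Nb <= N)%N -> (1 <= j)%N -> lN (kseq N) (Posz j) = cnt j.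
  move=> N j; rewrite geq_max => /andP [hMN hLN] hj.
  rewrite /lN -sum1dep_card.
  rewrite (eq_bigl (fun x : 'I_N => (x < L)%N && (k x == j))); last first.
    move=> [x hx] /=; case: (ltnP x L) => xL /=.
      rewrite (HMb x _ N hx hMN); last by rewrite ltnS ltnW.
      by apply/eqP/eqP => [[]|->].
    have hkL := hkN N (Ordinal hLN) (Ordinal hx) xL.
    rewrite (HMb L (ltnSn L) N hLN hMN) (hL L (leqnn L)) in hkL.
    case E: (kseq N (Ordinal hx)) hkL => [a|] //= ha.
    apply/negP => /eqP [] aj; move: ha; rewrite aj.
    by case: j hj {aj}.
  transitivity (\sum_(0 <= x < N | (x < L)%N && (k x == j)) 1)%N; first by rewrite big_mkord.
  rewrite (@big_cat_nat _ _ _ L) //=; last by rewrite ltnW.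
  rewrite [X in (_ + X)%N]big_nat_cond [X in (_ + X)%N]big_pred0 ?addn0; last first.
    move=> x; apply/negP => /andP [/andP [Lx _] /andP [xL _]].
    by move: (leq_ltn_trans Lx xL); rewrite ltnn.
  rewrite /cnt big_nat_cond [RHS]big_nat_cond; apply: eq_bigl => x.
  by case: (ltnP x L) => //=; rewrite andbF.
have cnt0 : forall j, ((k 0).+1 <= j)%N -> cnt j = 0%N.
  move=> j hj; rewrite /cnt big_pred0 // => x; apply/negP => /eqP kx.
  by move: (kmono 0%N x (leq0n x)); rewrite kx leqNgt hj.
split.
  exists (cnt i); split; first exact: hinf.
  by exists Nb => N hN; apply: hlN.
exists (\sum_(i <= j < maxn i (k 0).+1) cnt j)%N; split.
  exists cnt; split; first by move=> j hj; apply: hinf; exact: leq_trans hj.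
  exact: series_lemma.
exists Nb => N hN.
have [M HM] := series_lemma cnt (k 0).+1 i cnt0.
exists M => M' hM'; rewrite -(HM M' hM').
apply: eq_big_nat => j /andP [hj _]; apply: hlN => //; exact: leq_trans hj.
Qed.
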